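(* For every integer $k \geq 1$, let $\mathcal{P}(k)$ denote the greatest common divisor of all the sums $\sum_{i=1}^{k} P_{n+i}$, $n \geq 0$. Then $$\mathcal{P}(k) = \begin{cases} 2P_{k/2}, & \text{if } k \equiv 0 \pmod 4;\\ Q_{k/2}, & \text{if } k \equiv 2 \pmod 4;\\ 1, & \text{if } k \equiv 1,3 \pmod 4.\end{cases}$$
   Context: The Pell sequence $(P_n)_{n\ge0}$ is defined by $P_0=0$, $P_1=1$, $P_n = 2P_{n-1}+P_{n-2}$. The associated Pell sequence $(Q_n)_{n\ge0}$ is defined by $Q_0=1$, $Q_1=1$, $Q_n=2Q_{n-1}+Q_{n-2}$. *)

(* Defs.v *)
From mathcomp Require Import all_boot.
Set Implicit Arguments. Unset Strict Implicit. Unset Printing Implicit Defensive.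

Fixpoint pell (n : nat) : nat :=
  match n with
  | 0 => 0
  | 1 => 1
  | (m.+1 as n').+1 => 2 * pell n' + pell m
  end.

Fixpoint apell (n : nat) : nat :=
  match n with
  | 0 => 1
  | 1 => 1
  | (m.+1 as n').+1 => 2 * apell n' + apell m
  end.

Definition is_gcd_of (S : nat -> nat) (g : nat) : Prop :=
  (forall n, g %| S n) /\ (forall e, (forall n, e %| S n) -> e %| g).

Definition pell_window (k n : nat) : nat := \sum_(1 <= i < k.+1) pell (n + i).

(* Main.v *)
Require Import Defs.
From mathcomp Require Import all_boot.
From mathcomp Require Import zify.

Lemma pellSS n : pell n.+2 = 2 * pell n.+1 + pell n. Proof. by []. Qed.
Lemma apellSS n : apell n.+2 = 2 * apell n.+1 + apell n. Proof. by []. Qed.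

Lemma pell_apell n : apell n + pell n = pell n.+1.
Proof.
have H : forall n, apell n + pell n = pell n.+1 /\ apell n.+1 + pell n.+1 = pell n.+2.
  elim=> [|j [IH1 IH2]]; first by [].
  split=> //. rewrite apellSS pellSS (pellSS j.+1). lia.
by case: (H n).
Qed.

Lemma cassini n :
  if odd n then pell n.+1 * pell n.+1 + 1 = 2 * pell n * pell n.+1 + pell n * pell n
  else pell n.+1 * pell n.+1 = 2 * pell n * pell n.+1 + pell n * pell n + 1.
Proof.
elim: n => [|n IH]; first by [].
rewrite pellSS oddS.
case: (odd n) IH => /= IH; nia.
Qed.

Lemma double n :
  pell (n.*2) + 2 * (pell n * pell n) = 2 * pell n * pell n.+1 /\
  pell (n.*2).+1 = pell n * pell n + pell n.+1 * pell n.+1.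
Proof.
elim: n => [|n [IH1 IH2]] //.
rewrite doubleS !pellSS IH2. split; nia.
Qed.

Lemma Tsum j : 2 * (\sum_(1 <= i < j.+1) pell i) + 1 = pell j.+1 + pell j.
Proof.
elim: j => [|j IH]; first by rewrite big_geq.
rewrite big_nat_recr // pellSS.
move: IH; move: (\sum_(1 <= i < j.+1) pell i) (pell j.+1) (pell j) => s a b /=; lia.
Qed.

Lemma S0E k : pell_window k 0 = \sum_(1 <= i < k.+1) pell i.
Proof. by apply: eq_bigr => i _; rewrite add0n. Qed.

Lemma S1E k : pell_window k 1 + 1 = \sum_(1 <= i < k.+2) pell i.
Proof.
by rewrite big_nat_recl // addnC.
Qed.

Lemma S0T k : 2 * pell_window k 0 + 1 = pell k.+1 + pell k.
Proof. by rewrite S0E Tsum. Qed.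

Lemma S1T k : 2 * pell_window k 1 + 3 = pell k.+2 + pell k.+1.
Proof. rewrite -Tsum -S1E. lia. Qed.

Lemma window_rec k n :
  pell_window k n.+2 = 2 * pell_window k n.+1 + pell_window k n.
Proof.
rewrite /pell_window big_distrr -big_split /=.
by apply: eq_bigr => i _.
Qed.

Lemma gcd_of_S k g : g %| pell_window k 0 -> g %| pell_window k 1 ->
  (forall e, e %| pell_window k 0 -> e %| pell_window k 1 -> e %| g) ->
  is_gcd_of (pell_window k) g.
Proof.
move=> H0 H1 He; split; last by move=> e Hn; apply: He.
have: forall n, g %| pell_window k n /\ g %| pell_window k n.+1.
  elim=> [|n [IH1 IH2]]; first by split.
  split=> //. rewrite window_rec dvdn_add //. exact: dvdn_mull.
by move=> H n; case: (H n).
Qed.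

Lemma gcd_pell n : gcdn (pell n) (pell n.+1) = 1.
Proof.
elim: n => [|n IH] //. by rewrite pellSS gcdnMDl gcdnC.
Qed.

Lemma gcd_apell n : gcdn (apell n) (apell n.+1) = 1.
Proof.
elim: n => [|n IH] //. by rewrite apellSS gcdnMDl gcdnC.
Qed.

Lemma odd_pell n : odd (pell n) = odd n.
Proof.
have H : forall n, odd (pell n) = odd n /\ odd (pell n.+1) = odd n.+1.
  elim=> [|j [IH1 IH2]]; first by [].
  split=> //. by rewrite pellSS oddD oddM IH1 /= negbK.
by case: (H n).
Qed.

Lemma even_case m : 0 < m ->
  is_gcd_of (pell_window (2 * m)) (if odd m then apell m else 2 * pell m).
Proof.
move=> hm.
have [D1 D2] := double m. rewrite -mul2n in D1 D2.
have C := cassini m. have E0 := S0T (2 * m). have E1 := S1T (2 * m).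
rewrite (pellSS (2 * m)) in E1.
have Q0 := pell_apell m. have Q1 := pell_apell m.+1.
have Q2 := apellSS m. have P2 := pellSS m.
have G1 := gcd_pell m.+1. have G2 := gcd_apell m.+1.
have H0 : forall e, e %| pell_window (2*m) 0 -> e %| pell_window (2*m) 1 -> e %| gcdn (pell_window (2*m) 0) (pell_window (2*m) 1).
  by move=> e h0 h1; rewrite dvdn_gcd h0 h1.
suff [F0 F1] : pell_window (2*m) 0 = (if odd m then apell m else 2 * pell m) *
                    (if odd m then apell m.+1 else pell m.+1) /\
               pell_window (2*m) 1 = (if odd m then apell m else 2 * pell m) *
                    (if odd m then apell m.+2 else pell m.+2).
  apply: gcd_of_S; rewrite ?F0 ?F1; [exact: dvdn_mulr | exact: dvdn_mulr |].
  move=> e h0 h1; rewrite -F0 -F1 in h0 h1; have := H0 _ h0 h1.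
  by rewrite F0 F1 -muln_gcdr; case: (odd m); rewrite ?G1 ?G2 muln1.
case: (odd m) C => C.
- move: E0 E1 D1 D2 C Q0 Q1 Q2 P2; move: (pell_window (2*m) 0) (pell_window (2*m) 1) (pell (2 * m)) (pell (2*m).+1)
      (pell m) (pell m.+1) (pell m.+2) (apell m) (apell m.+1) (apell m.+2)
      => s0 s1 a b x y z q q1 q2 E0 E1 D1 D2 C Q0 Q1 Q2 P2.
  subst y z q2. have -> : q1 = 2 * x + q by lia.
  split; nia.
- move: E0 E1 D1 D2 C P2; move: (pell_window (2*m) 0) (pell_window (2*m) 1) (pell (2 * m)) (pell (2*m).+1)
      (pell m) (pell m.+1) (pell m.+2) => s0 s1 a b x y z E0 E1 D1 D2 C P2.
  subst z. split; nia.
Qed.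

Lemma odd_case k : odd k -> is_gcd_of (pell_window k) 1.
Proof.
move=> hk.
apply: gcd_of_S => // e h0 h1.
have E0 := S0T k. have E1 := S1T k. rewrite pellSS in E1.
have C := cassini k. rewrite hk in C.
have Ok : odd (pell k.+1) = false by rewrite odd_pell /= hk.
have Pk : 0 < pell k.+1.
  elim: (k) => [|j IH] //; rewrite pellSS; lia.
move: h0 h1 E0 E1 C Ok Pk; move: (pell_window k 0) (pell_window k 1) (pell k) (pell k.+1)
  => s0 s1 x1 x2 h0 h1 E0 E1 C Ok Pk.
have [w Hw] : exists w, x2 = w.+1 by exists x2.-1; lia.
subst x2.
have Hs : s1 = s0 + w by lia.
have hw : e %| w by rewrite Hs dvdn_addr in h1.
have hx1 : e %| x1.
  have : e %| 2 * s0 by exact: dvdn_mull.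
  have -> : 2 * s0 = w + x1 by lia.
  by rewrite (dvdn_addr _ hw).
have he2 : e %| 2.
  have : e %| x1 * (2 * w.+1 + x1) by exact: dvdn_mulr.
  have -> : x1 * (2 * w.+1 + x1) = 2 + (w * w + 2 * w) by nia.
  have hh : e %| w * w + 2 * w by apply: dvdn_add; [exact: dvdn_mulr | exact: dvdn_mull].
  by rewrite addnC (dvdn_addr _ hh).
have : e <= 2 by exact: dvdn_leq.
clear h0 h1 hx1.
case: e he2 hw => [|[|[|e]]] //= _ hw _.
move: Ok => /=; case/dvdnP: hw => t ->.
by rewrite oddM andbF.
Qed.

Theorem theorem15 (k : nat) (hk : 1 <= k) :
  is_gcd_of (pell_window k)
    (if k %% 4 == 0 then 2 * pell (k %/ 2)
     else if k %% 4 == 2 then apell (k %/ 2)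
     else 1).
Proof.
have [j [r [Hk Hr]]] : exists j r, k = j * 4 + r /\ r < 4.
  by exists (k %/ 4), (k %% 4); split; [exact: divn_eq | exact: ltn_pmod].
subst k.
case: r Hr hk => [|[|[|[|r]]]] // _ hk.
- have -> : (j * 4 + 0) %% 4 = 0 by lia.
  have -> : (j * 4 + 0) %/ 2 = j.*2 by lia.
  have -> : j * 4 + 0 = 2 * j.*2 by lia.
  have hj : 0 < j.*2 by lia.
  have := even_case _ hj. by rewrite odd_double.
- have -> : (j * 4 + 1) %% 4 = 1 by lia.
  apply: odd_case. by rewrite oddD oddM andbF.
- have -> : (j * 4 + 2) %% 4 = 2 by lia.
  have -> : (j * 4 + 2) %/ 2 = j.*2.+1 by lia.
  have -> : j * 4 + 2 = 2 * j.*2.+1 by lia.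
  have hj : 0 < j.*2.+1 by [].
  have := even_case _ hj. by rewrite /= odd_double.
- have -> : (j * 4 + 3) %% 4 = 3 by lia.
  apply: odd_case. by rewrite oddD oddM andbF.
Qed.
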